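(* Let $n\ge3$, let $i\ge 0$ be an integer with $i>(n-4)(n-1)$, and let $1\le k\le n$. Then \[|\mathcal{L}_i\cap\mathcal{B}_k|=b_{r_i+k-n-1}\qquad\text{and}\qquad |\mathcal{L}_i|=c_{r_i-1}.\]
   Context: Fix an integer $n\ge 3$. A partition is a sequence $\Lambda=(\lambda_j)_{j\ge1}$ of non-negative integers with finite support; $\mathrm{wt}(\Lambda)=\sum_j j\lambda_j$; $\mathrm{Part}(k)$ is the set of partitions with $\lambda_j=0$ for $j>k$. Write $x^\Lambda=\prod_j x_j^{\lambda_j}$, $\deg(x^\Lambda)=\sum_j\lambda_j$, and $\partial_k$ for the formal symbol of partial derivative in $x_k$. $\mathcal{B}=\{x^\Lambda\partial_k : 1\le k\le n,\ \Lambda\in\mathrm{Part}(k-1)\}$ and $\mathcal{B}_u=\{x^\Lambda\partial_k\in\mathcal{B}: k=u\}$. For an integer $i\ge-1$, let $r_i\in\{1,\dots,n-1\}$ with $i\equiv r_i\pmod{n-1}$ and $h_i=\lfloor (i-1)/(n-1)\rfloor+1$. Define $\mathrm{WD}(x^\Lambda\partial_k)=\mathrm{wt}(\Lambda)-\deg(x^\Lambda)+n-k$ and $\mathrm{lev}_i(x^\Lambda\partial_k)=h_i\,\mathrm{WD}(x^\Lambda\partial_k)+\deg(x^\Lambda)-1$. For $i\ge-1$, $\mathcal{N}_i=\{b\in\mathcal{B}: \mathrm{lev}_j(b)\le j\text{ for some integer } -1\le j\le i\}$, and $\mathcal{L}_i=\mathcal{N}_i\setminus\mathcal{N}_{i-1}$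 for $i\ge0$. Let $a_m$ be the number of partitions of $m\ge0$ ($a_0=1$), $b_m=\sum_{j=0}^m a_j$, $c_m=\sum_{j=0}^m b_j$, with the convention $b_m=0$ for $m<0$. *)

(* Defs.v *)
From mathcomp Require Import all_boot all_order all_algebra.
Set Implicit Arguments. Unset Strict Implicit. Unset Printing Implicit Defensive.
Import Order.TTheory GRing.Theory Num.Theory.

(* An element x^Lambda d_k of B is encoded as the pair (k, lam) where
   lam = [:: lambda_1; ...; lambda_{k-1}] (Lambda in Part(k-1)). *)
Definition inB (n : nat) (b : nat * seq nat) : Prop :=
  (1 <= b.1 <= n)%N /\ size b.2 = b.1.-1.

Definition wt (lam : seq nat) : nat :=
  (\sum_(j < size lam) j.+1 * nth 0 lam j)%N.
Definition deg (lam : seq nat) : nat := sumn lam.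

(* r_i in {1..n-1} with i = r_i mod (n-1) *)
Definition rr (n : nat) (i : int) : nat :=
  (absz ((i - 1) %% (n.-1)%:Z)%Z).+1.
Definition hh (n : nat) (i : int) : int :=
  ((i - 1) %/ (n.-1)%:Z)%Z + 1.

Definition WD (n : nat) (b : nat * seq nat) : int :=
  (wt b.2)%:Z - (deg b.2)%:Z + n%:Z - (b.1)%:Z.

Definition lev (n : nat) (i : int) (b : nat * seq nat) : int :=
  hh n i * WD n b + (deg b.2)%:Z - 1.

Definition inN (n : nat) (i : int) (b : nat * seq nat) : Prop :=
  inB n b /\ exists j : int, (-1 <= j)%R /\ (j <= i)%R /\ (lev n j b <= j)%R.

Definition inL (n : nat) (i : int) (b : nat * seq nat) : Prop :=
  inN n i b /\ ~ inN n (i - 1) b.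

Definition card_is (T : eqType) (P : T -> Prop) (m : nat) : Prop :=
  exists s : seq T, uniq s /\ (forall x, P x <-> x \in s) /\ size s = m.

(* a_m = number of partitions of m: Lambda in Part(m) with each lambda_j <= m
   and wt Lambda = m (every partition of m is of this form). *)
Definition apart (m : nat) : nat :=
  #|[set f : {ffun 'I_m -> 'I_m.+1} | (\sum_(j < m) j.+1 * f j)%N == m]|.

Definition bpart (m : int) : nat :=
  match m with
  | Posz k => (\sum_(0 <= j < k.+1) apart j)%N
  | Negz _ => 0%N
  end.

Definition cpart (m : nat) : nat := (\sum_(0 <= j < m.+1) bpart j%:Z)%N.

(* Main.v *)
Require Import Defs.
From mathcomp Require Import all_boot all_order all_algebra zify.
Import Order.TTheory GRing.Theory Num.Theory.

Definition ee (lam : seq nat) : nat := \sum_(0 <= j < size lam) j * nth 0 lam j.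

Lemma degE lam : deg lam = \sum_(0 <= j < size lam) nth 0 lam j.
Proof.
elim: lam => [|x l IH]; first by rewrite /deg big_nil.
by rewrite /deg /= big_nat_recl //= -/(deg l) IH.
Qed.

Lemma wtE lam : wt lam = ee lam + deg lam.
Proof.
rewrite /wt degE /ee -big_split /= -(big_mkord xpredT (fun j => j.+1 * nth 0 lam j)).
by apply: eq_bigr => j _; rewrite mulSn addnC.
Qed.

Lemma term_le_ee lam j : j * nth 0 lam j <= ee lam.
Proof.
case: (ltnP j (size lam)) => hj; last by rewrite nth_default // muln0.
rewrite /ee (big_cat_nat _ (n:=j)) //=; last exact: ltnW.
rewrite [X in _ + X]big_ltn //.
lia.
Qed.

Lemma ee_le lam : ee lam <= (size lam).-1 * deg lam.
Proof.
rewrite /ee degE big_distrr /= !big_seq; apply: leq_sum => j.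
rewrite mem_index_iota => /andP[_ hj].
apply: leq_mul => //; lia.
Qed.

Lemma sum_trunc (F : nat -> nat) a b : a <= b -> (forall j, a <= j -> F j = 0) ->
  \sum_(0 <= j < b) F j = \sum_(0 <= j < a) F j.
Proof.
move=> ab h; rewrite (big_cat_nat _ (n:=a)) //= [X in _ + X]big1_seq ?addn0 //.
by move=> j; rewrite /= mem_index_iota => /andP[aj _]; apply: h.
Qed.

Local Open Scope ring_scope.
Lemma decomp (n : nat) (j : int) : (2 <= n)%N ->
  j = (hh n j - 1) * (n.-1)%:Z + (rr n j)%:Z /\ (1 <= rr n j <= n.-1)%N.
Proof.
move=> n2; rewrite /hh /rr.
have N0 : (n.-1)%:Z != 0 by lia.
have h1 := modz_ge0 (j - 1) N0.
have h2 := @ltz_pmod (j - 1) (n.-1)%:Z ltac:(lia).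
have h3 := divz_eq (j - 1) (n.-1)%:Z.
move: h1 h2 h3; set q := ((j-1) %/ _)%Z; set r := ((j-1) %% _)%Z.
case: r => [r|r] //= _ h2 h3; split; first by lia.
lia.
Qed.
Lemma uniq_dec (N a a' p p' : int) : 1 <= p <= N -> 1 <= p' <= N ->
  (a - 1) * N + p = (a' - 1) * N + p' -> a = a' :> int /\ p = p' :> int.
Proof.
move=> /andP[h1 h1'] /andP[h2 h2'] e.
have E : (a - a') * N = p' - p by rewrite mulrBl !mulrBl in e *; lia.
suff aa : a = a' by subst; lia.
case: (ltrgtP a a') => // H.
- have : 0 <= (a' - a - 1) * N by apply: mulr_ge0; lia.
  rewrite mulrBl mulrBl; lia.
- have : 0 <= (a - a' - 1) * N by apply: mulr_ge0; lia.
  rewrite mulrBl mulrBl; lia.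
Qed.
Lemma Cj n k lam (j : int) : (2 <= n)%N ->
  (lev n j (k, lam) <= j) =
  ((deg lam)%:Z + n%:Z - 2 - (rr n j)%:Z <= hh n j * (k%:Z - 1 - (ee lam)%:Z)).
Proof.
move=> n2; have [dj _] := @decomp n j n2.
rewrite /lev /WD /= wtE PoszD.
move: dj; set h := hh n j; set rho := rr n j; set m := (k%:Z - 1 - _).
have -> : (ee lam)%:Z + (deg lam)%:Z - (deg lam)%:Z + n%:Z - k%:Z = n%:Z - 1 - m.
  by rewrite /m; lia.
clearbody m => dj.
apply/idP/idP; rewrite mulrBr mulrBr; lia.
Qed.

Lemma charL n (i : int) k lam : (3 <= n)%N -> 0 <= i -> (1 <= k <= n)%N ->
  size lam = k.-1 ->
  inL n i (k, lam) <-> (ee lam + (n - rr n i) + 1 <= k)%N /\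
     (deg lam + n = rr n i + 2 + `|hh n i|%N * (k.-1 - ee lam))%N.
Proof.
move=> n3 i0 /andP[k1 kn] sz.
have n2 : (2 <= n)%N by lia.
have inBk : inB n (k,lam) by split => //=; apply/andP.
have [di /andP[r1 rN]] := @decomp n i n2.
have CC := fun j => @Cj n k lam j n2.
move: di r1 rN CC; set r := rr n i; set H := hh n i => di r1 rN CC.
have H0 : 0 <= H.
  case: (ltrP H 0) => // Hlt.
  have : 0 <= (-H-1) * (n.-1)%:Z by apply: mulr_ge0; lia.
  lia.
have [Hn HE] : exists Hn : nat, H = Posz Hn by exists `|H|%N; rewrite gez0_abs.
rewrite HE /=.
set d := deg lam in CC *; set e := ee lam in CC *.
set m := (k%:Z - 1 - e%:Z) in CC *.
have mle : m <= n%:Z - 1 by rewrite /m; lia.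
split.
- move=> [[_ [j [j1 [ji Cj_]]]] nN].
  have ej : j = i.
    case: (ltrP j i) => [jlt|]; last lia.
    by exfalso; apply: nN; split => //; exists j; split => //; split => //; lia.
  subst j; rewrite CC -/H -/r in Cj_.
  have notC : forall j, -1 <= j -> j <= i - 1 ->
      hh n j * m < d%:Z + n%:Z - 2 - (rr n j)%:Z.
    move=> j a b; rewrite ltNge; apply/negP; rewrite -CC => c; apply: nN; split => //.
    by exists j.
  have main : n%:Z - r%:Z <= m /\ d%:Z + n%:Z - 2 - r%:Z = H * m.
    case: (posnP Hn) => Hn0.
    +
      have ir : i = 0 /\ r%:Z = n%:Z - 1 by subst H; rewrite HE Hn0 in di; lia.
      have [dm /andP[rm1 rmN]] := @decomp n (-1) n2.
      have [h0 r0] := @uniq_dec (n.-1)%:Z (hh n (-1)) 0 (rr n (-1))%:Z (n.-1 - 1)%:Z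
        ltac:(lia) ltac:(lia) ltac:(lia).
      have := notC (-1) ltac:(lia) ltac:(lia).
      rewrite h0 r0 mul0r => nc.
      have d1 : d = 1%N.
        lia.
      have eb := ee_le lam; rewrite -/e -/d d1 sz muln1 in eb.
      have k2 : (2 <= k)%N.
        case: (ltnP 1 k) => // k1'.
        have : size lam = 0%N by rewrite sz; lia.
        by move/size0nil => l0; move: d1; rewrite /d l0.
      rewrite HE Hn0 mul0r; split; last lia.
      rewrite /m; lia.
    + have [dm /andP[rm1 rmN]] := @decomp n (i - r%:Z) n2.
      have [h1 r1'] := @uniq_dec (n.-1)%:Z (hh n (i - r%:Z)) (H - 1) (rr n (i - r%:Z))%:Z (n.-1)%:Z
        ltac:(lia) ltac:(lia) ltac:(rewrite HE; lia).
      have HN : 0 <= (H - 1) * (n.-1)%:Z by apply: mulr_ge0; lia.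
      have := notC (i - r%:Z) ltac:(lia) ltac:(lia).
      rewrite h1 r1' => nc1.
      case: (ltnP 1 r) => r2.
      * have [dm2 /andP[rm21 rm2N]] := @decomp n (i - 1) n2.
        have [h2 r2'] := @uniq_dec (n.-1)%:Z (hh n (i - 1)) H (rr n (i - 1))%:Z (r.-1)%:Z
          ltac:(lia) ltac:(lia) ltac:(lia).
        have := notC (i - 1) ltac:(lia) ltac:(lia).
        rewrite h2 r2' => nc2.
        have HM : H * m - m = (H - 1) * m by rewrite mulrBl mul1r.
        lia.
      * have HM : H * m - m = (H - 1) * m by rewrite mulrBl mul1r.
        lia.
  case: main => m1 m2.
  have mn : (k.-1 - e)%N%:Z = m by rewrite /m; lia.
  split; first by rewrite /m in m1; lia.
  rewrite HE -mn in m2. lia.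
- move=> [c1 c2].
  have mn : (k.-1 - e)%N%:Z = m by rewrite /m; lia.
  have m1 : n%:Z - r%:Z <= m by rewrite /m; lia.
  have m2 : d%:Z + n%:Z - 2 - r%:Z = H * m.
    by rewrite HE -mn; lia.
  split.
  + split => //; exists i; split; first lia; split; first lia.
    by rewrite CC -/r -/H; lia.
  + move=> [_ [j [j1 [ji Cjj]]]].
    rewrite CC in Cjj.
    have [dj /andP[rj1 rjN]] := @decomp n j n2.
    have hle : hh n j <= H.
      case: (lerP (hh n j) H) => // hlt.
      have : 0 <= (hh n j - 1 - H) * (n.-1)%:Z by apply: mulr_ge0; lia.
      lia.
    case: (eqVneq (hh n j) H) => hj.
    * rewrite hj in Cjj dj; lia.
    * have : 0 <= (H - 1 - hh n j) * m by apply: mulr_ge0; lia.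
      lia.
Qed.

Local Close Scope ring_scope.

Lemma card_img (T : finType) (U : eqType) (A : {set T}) (g : T -> U) (P : U -> Prop) :
  {in A &, injective g} -> (forall x, P x <-> exists2 t, t \in A & x = g t) ->
  card_is P #|A|.
Proof.
move=> ginj hP; exists (map g (enum A)); split; last split.
- by rewrite map_inj_in_uniq ?enum_uniq // => x y; rewrite !mem_enum; apply: ginj.
- move=> x; rewrite hP; split.
  + by move=> [t tA ->]; apply: map_f; rewrite mem_enum.
  + by move/mapP => [t]; rewrite mem_enum => tA ->; exists t.
- by rewrite size_map cardE.
Qed.

Lemma card_big (U : eqType) (s : seq nat) (P : nat -> U -> Prop) (c : nat -> nat)
  (Q : U -> Prop) :
  uniq s -> (forall t, t \in s -> card_is (P t) (c t)) ->
  (forall t t' x, t \in s -> t' \in s -> P t x -> P t' x -> t = t') ->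
  (forall x, Q x <-> exists2 t, t \in s & P t x) ->
  card_is Q (\sum_(t <- s) c t).
Proof.
elim: s Q => [|t s IH] Q us hc hd hQ.
  exists [::]; split => //; split; last by rewrite big_nil.
  by move=> x; split => //; rewrite hQ; case.
move: us => /= /andP[ts us].
have [L [uL [mL sL]]] := hc t (mem_head _ _).
have ms : forall y, y \in s -> y \in t :: s by move=> y h; rewrite inE h orbT.
have [L' [uL' [mL' sL']]] := IH (fun x => exists2 t', t' \in s & P t' x) us
  (fun t' h => hc t' (ms _ h))
  (fun a b x ha hb => hd a b x (ms _ ha) (ms _ hb)) (fun x => iff_refl _).
exists (L ++ L'); split; last split.
- rewrite cat_uniq uL uL' /= andbT; apply/hasPn => x /mL' [t' t's Pt'x].
  apply/negP => /mL Ptx.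
  have ett : t = t' := hd t t' x (mem_head _ _) (ms _ t's) Ptx Pt'x.
  by move: ts; rewrite ett t's.
- move=> x; rewrite hQ mem_cat; split.
  + move=> [t' ]; rewrite inE => /orP[/eqP -> Ptx|t's Pt'x].
    * by apply/orP; left; apply/mL.
    * by apply/orP; right; apply/mL'; exists t'.
  + move=> /orP[/mL Ptx|/mL' [t' t's Pt'x]]; first by exists t; rewrite ?mem_head.
    by exists t' => //; rewrite inE t's orbT.
- by rewrite size_cat sL sL' big_cons.
Qed.

Definition Aset e := [set f : {ffun 'I_e -> 'I_e.+1} | (\sum_(j < e) j.+1 * f j) == e].
Set Implicit Arguments. Unset Strict Implicit.
Definition fs e (f : {ffun 'I_e -> 'I_e.+1}) : seq nat := [seq (f j : nat) | j <- enum 'I_e].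
Definition lamOf (k e D : nat) (f : {ffun 'I_e -> 'I_e.+1}) : seq nat :=
  (D - \sum_(j < e) (f j : nat)) :: fs f ++ nseq (k.-2 - e) 0.

Lemma size_fs e f : size (@fs e f) = e.
Proof. by rewrite size_map size_enum_ord. Qed.

Lemma nth_fs e f (j : 'I_e) : nth 0 (@fs e f) j = f j.
Proof. by rewrite (nth_map j) ?size_enum_ord // nth_ord_enum. Qed.

Lemma nth_lamOf k e D f j : nth 0 (@lamOf k e D f) j.+1 = nth 0 (fs f) j.
Proof.
rewrite /lamOf /= nth_cat size_fs; case: ltnP => // h.
by rewrite nth_nseq if_same nth_default ?size_fs.
Qed.

Lemma sumn_fs e f : sumn (@fs e f) = \sum_(j < e) (f j : nat).
Proof. by rewrite sumnE big_map big_enum. Qed.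

Lemma zero_nth lam j : ee lam < j -> nth 0 lam j = 0.
Proof.
move=> h; have := term_le_ee lam j; case: (nth 0 lam j) => // x.
rewrite mulnS; lia.
Qed.

Lemma sumf_le e f : f \in Aset e -> \sum_(j < e) (f j : nat) <= e.
Proof.
rewrite inE => /eqP h; apply: (leq_trans _ (eq_leq h)).
apply: leq_sum => j _; exact: leq_pmull.
Qed.

Lemma lamOf_props k e D f : f \in Aset e -> e <= k.-2 -> 2 <= k -> e <= D ->
  [/\ size (@lamOf k e D f) = k.-1, ee (lamOf k D f) = e & deg (lamOf k D f) = D].
Proof.
move=> fA ek k2 eD; have sf := sumf_le fA.
split.
- rewrite /lamOf /= size_cat size_fs size_nseq; lia.
- rewrite /ee (@sum_trunc _ e.+1); last first.
  + move=> j hj; case: j hj => // j hj; rewrite nth_lamOf nth_default ?size_fs ?muln0 //.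
  + rewrite /lamOf /= size_cat size_fs size_nseq; lia.
  rewrite big_nat_recl //= mul0n add0n.
  move: fA; rewrite inE => /eqP h; apply: (etrans _ h).
  rewrite big_mkord; apply: eq_bigr => j _. by rewrite nth_cat size_fs ltn_ord nth_fs.
- rewrite /lamOf /deg -cat_cons sumn_cat /= sumn_fs sumn_nseq mul0n addn0 subnK //; exact: leq_trans sf eD.
Qed.

Lemma lamOf_inj k e D : injective (@lamOf k e D).
Proof.
move=> f g h; apply/ffunP => j; apply: val_inj.
by rewrite /= -(nth_fs f) -(nth_fs g) -(nth_lamOf k D f) -(nth_lamOf k D g) h.
Qed.

Lemma lamOf_surj k lam e D : size lam = k.-1 -> ee lam = e -> deg lam = D ->
  e <= k.-2 -> 2 <= k -> exists2 f, f \in Aset e & lam = lamOf k D f.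
Proof.
move=> sz ee_ dg ek k2.
have bnd : forall j, nth 0 lam j.+1 < e.+1.
  move=> j; rewrite ltnS -ee_; apply: leq_trans (term_le_ee lam j.+1); exact: leq_pmull.
pose f : {ffun 'I_e -> 'I_e.+1} := [ffun j : 'I_e => inord (nth 0 lam j.+1)].
have fE : forall j : 'I_e, (f j : nat) = nth 0 lam j.+1.
  by move=> j; rewrite ffunE inordK.
have sE : \sum_(0 <= j < e.+1) j * nth 0 lam j = e.
  have h1 : e.+1 <= size lam by rewrite sz; lia.
  have h2 : forall j, e.+1 <= j -> j * nth 0 lam j = 0.
    by move=> j hj; rewrite zero_nth ?muln0 // ee_.
  by rewrite -(@sum_trunc _ _ _ h1 h2) -ee_.
exists f.
- rewrite inE; apply/eqP; apply: (etrans _ sE).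
  rewrite big_nat_recl // mul0n add0n big_mkord; apply: eq_bigr => j _; by rewrite fE.
- apply: (@eq_from_nth _ 0).
    by rewrite /lamOf /= size_cat size_fs size_nseq sz; lia.
  move=> j _; case: j => [|j].
  + have dE : D = nth 0 lam 0 + \sum_(j < e) (f j : nat).
      have h1 : e <= k.-2 := ek.
      have h2 : forall j, e <= j -> nth 0 lam j.+1 = 0.
        by move=> j hj; rewrite zero_nth // ee_.
      have kk : k.-1 = (k.-2).+1 by lia.
      rewrite -dg degE sz kk big_nat_recl //; congr (_ + _).
      rewrite (@sum_trunc _ _ _ h1 h2) big_mkord; apply: eq_bigr => j _; by rewrite fE.
    by rewrite /= dE addnK.
  + rewrite nth_lamOf; case: (ltnP j e) => hj.
    * by rewrite (nth_fs f (Ordinal hj)) fE.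
    * rewrite zero_nth; last by rewrite ee_.
      by rewrite nth_default ?size_fs.
Qed.

Lemma keyineq n r Hn k e : 3 <= n -> n - 3 <= Hn -> 1 <= r -> r <= n.-1 -> k <= n ->
  e + (n - r) + 1 <= k -> e + n <= r + 2 + Hn * (k.-1 - e).
Proof.
move=> n3 hH r1 rn kn ek.
have [mm emm] : exists mm, k.-1 - e = mm by eexists.
have [p ep] : exists p, n - 3 = p by eexists.
have [s es] : exists s, n - r = s by eexists.
rewrite emm; rewrite ep in hH.
have h0 : s <= mm by lia.
have h1 : p * mm <= Hn * mm by rewrite leq_mul2r hH orbT.
have h2 : p * s <= p * mm by rewrite leq_mul2l h0 orbT.
have h3 : p * 1 <= p * s by rewrite leq_mul2l; apply/orP; right; lia.
lia.
Qed.

Lemma bpart_neg (m : int) : (m < 0)%R -> bpart m = 0.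
Proof. by case: m => // m' /=; lia. Qed.

Lemma sum_shift n r : 1 <= r <= n ->
  \sum_(k <- iota 1 n) bpart ((r + k)%:Z - n%:Z - 1)%R = \sum_(0 <= j < r) bpart j%:Z.
Proof.
move=> /andP[r1 rn].
have -> : iota 1 n = iota 1 (n - r) ++ iota (1 + (n - r)) r by rewrite -iotaD subnK.
rewrite big_cat /= big1_seq ?add0n; last first.
  by move=> k /andP[_]; rewrite mem_iota => hk; apply: bpart_neg; lia.
rewrite -(addn0 (1 + (n - r))) iotaDl big_map /index_iota subn0.
apply: eq_bigr => j _.
have e : (Posz (r + (1 + (n - r) + j)) - Posz n - 1)%R = Posz j by lia.
by rewrite e.
Qed.

Lemma Hbound n (i : int) : 3 <= n -> (0 <= i)%R -> ((n%:Z - 4) * (n%:Z - 1) < i)%R ->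
  n - 3 <= `|hh n i|%N.
Proof.
move=> n3 i0 ilow.
have n2 : 2 <= n by lia.
have [di /andP[r1 rN]] := @decomp n i n2.
have N1E : ((n.-1)%:Z = n%:Z - 1)%R by lia.
rewrite N1E in di.
move: di; set H := hh n i => di.
have H0 : (0 <= H)%R.
  case: (ltrP H 0) => // Hlt.
  have : (0 <= (-H-1) * (n%:Z - 1))%R by apply: mulr_ge0; lia.
  lia.
have H3 : (n%:Z - 3 <= H)%R.
  case: (ltrP H (n%:Z - 3)) => // Hlt.
  have : (0 <= (n%:Z - 4 - H) * (n%:Z - 1))%R by apply: mulr_ge0; lia.
  lia.
have [Hn HE] : exists Hn : nat, H = Posz Hn by exists `|H|%N; rewrite gez0_abs.
rewrite HE /=; lia.
Qed.

Lemma part1 n (i : int) k : 3 <= n -> (0 <= i)%R -> n - 3 <= `|hh n i|%N -> 1 <= k <= n ->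
  card_is (fun b => inL n i b /\ b.1 = k) (bpart ((rr n i + k)%:Z - n%:Z - 1)%R).
Proof.
move=> n3 i0 hH /andP[k1 kn].
have n2 : 2 <= n by lia.
have [_ /andP[r1 rN]] := @decomp n i n2.
have CH := fun lam sz => @charL n i k lam n3 i0 (introT andP (conj k1 kn)) sz.
move: hH r1 rN CH; set r := rr n i; set Hn := `|hh n i|%N => hH r1 rN CH.
case: (leqP k (n - r)) => kr.
  rewrite bpart_neg; last by lia.
  exists [::]; split => //; split => // -[k' lam]; split => // -[hL /= ek]; subst k'.
  have [_ sz] := hL.1.1; move/(CH _ sz): hL => /= [c1 _]; lia.
have -> : ((r + k)%:Z - n%:Z - 1)%R = Posz (r + k - n - 1) by lia.
rewrite /bpart /index_iota subn0.
pose D e := r + 2 + Hn * (k.-1 - e) - n.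
have good : forall e, e \in iota 0 (r + k - n - 1).+1 ->
    [/\ e <= k.-2, 2 <= k, e <= D e & D e + n = r + 2 + Hn * (k.-1 - e)].
  move=> e; rewrite mem_iota => /andP[_ he].
  have := @keyineq n r Hn k e n3 hH r1 rN kn ltac:(lia).
  rewrite /D; split; lia.
apply: (@card_big _ _ (fun e x => exists2 f, f \in Aset e & x = (k, lamOf k (D e) f))).
- exact: iota_uniq.
- move=> e _; apply: (@card_img _ _ (Aset e) (fun f => (k, lamOf k (D e) f))) => //.
  by move=> f g _ _ h; apply: (@lamOf_inj k e (D e)); exact: (congr1 snd h).
- move=> e e' x he he' [f fA ->] [g gA] h.
  have := congr1 (fun p => ee p.2) h => /=.
  have [g1 g2 g3 g4] := good e he; have [g1' g2' g3' g4'] := good e' he'.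
  have [_ -> _] := lamOf_props fA g1 g2 g3.
  by have [_ -> _] := lamOf_props gA g1' g2' g3'.
- move=> [k' lam]; split.
  + move=> [hL /= ek]; subst k'.
    have [_ /= sz] := hL.1.1; move/(CH _ sz): hL => /= [c1 c2].
    have he : ee lam \in iota 0 (r + k - n - 1).+1 by rewrite mem_iota; lia.
    have [g1 g2 g3 g4] := good _ he.
    have dg : deg lam = D (ee lam) by rewrite /D; lia.
    have [f fA lE] := lamOf_surj sz (erefl _) dg g1 g2.
    by exists (ee lam) => //; exists f => //; rewrite {1}lE.
  + move=> [e he [f fA [-> ->]]]; split => //.
    have [g1 g2 g3 g4] := good e he.
    have [sz ee_ dg] := lamOf_props fA g1 g2 g3.
    apply/(CH _ sz); rewrite ee_ dg; split => //.
    by move: he; rewrite mem_iota; lia.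
Qed.

Theorem corollary2p16 (n : nat) (i : int) (k : nat) :
  (3 <= n)%N -> (0 <= i)%R ->
  ((n%:Z - 4) * (n%:Z - 1) < i)%R ->
  (1 <= k <= n)%N ->
  card_is (fun b => inL n i b /\ b.1 = k)
          (bpart ((rr n i + k)%:Z - n%:Z - 1)%R)
  /\ card_is (inL n i) (cpart (rr n i).-1).
Proof.
move=> n3 i0 ilow kb.
have hH := Hbound n3 i0 ilow.
split; first exact: part1.
have n2 : 2 <= n by lia.
have [_ /andP[r1 rN]] := @decomp n i n2.
rewrite /cpart prednK // -(@sum_shift n (rr n i)); last by apply/andP; split; lia.
apply: (@card_big _ _ (fun k b => inL n i b /\ b.1 = k)).
- exact: iota_uniq.
- move=> t; rewrite mem_iota => ht; apply: part1 => //; lia.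
- by move=> t t' x _ _ [_ <-] [_ <-].
- move=> x; split.
  + move=> hL; exists x.1 => //; rewrite mem_iota; have [/andP[a b] _] := hL.1.1. by rewrite a /= add1n ltnS.
  + by move=> [t _ []].
Qed.
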